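(* Let $\mathbf{A}=(\mathcal{P},\mathcal{L},\parallel)$ be an affine space over $\mathrm{GF}(2)$ of countably infinite dimension, and let $\mathbf{A}'=(\mathcal{P}',\mathcal{L}',\parallel')$ be an $m$-dimensional affine space, $3\le m\le\aleph_0$, over a countably infinite (skew) field $F'$ of arbitrary characteristic. Then there exists a bijection $\varphi:\mathcal{L}\to\mathcal{L}'$ satisfying $a\sim b\implies a^\varphi\sim' b^\varphi$ for all $a,b\in\mathcal{L}$ such that the associated injection $\lambda:\mathcal{P}\to\mathcal{P}'$, $a\cap b\mapsto a^\varphi\cap b^\varphi$ ($a,b\in\mathcal{L}$ adjacent), is not surjective; indeed, $\varphi$ can be chosen so that there is a set $\mathcal{B}'\subseteq\mathcal{P}'$ containing no three collinear points and meeting every line of $\mathbf{A}'$ in exactly two points, with $\lambda(\mathcal{P})=\mathcal{B}'$.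
   Context: In an affine space, lines $a,b$ are related, $a\sim b$, if $a\cap b\ne\emptyset$, and adjacent if related and distinct; analogously $\sim'$ in $\mathbf{A}'$. In an affine space over $\mathrm{GF}(2)$ every line consists of exactly two points, so lines of $\mathbf{A}$ are exactly the 2-subsets of $\mathcal{P}$. *)

(* Defs.v *)
From HB Require Import structures.
From mathcomp Require Import all_boot all_order all_algebra.
Set Implicit Arguments. Unset Strict Implicit. Unset Printing Implicit Defensive.
Import GRing.Theory.
Local Open Scope ring_scope.

Definition skew_field (F : unitRingType) : Prop :=
  forall x : F, x != 0 -> x \is a GRing.unit.

Definition countably_infinite (T : Type) : Prop :=
  exists e : nat -> T, bijective e.

(* Dimension: [Some k] = finite dimension k, [None] = aleph_0. *)
Definition affdim := option nat.

(* Points of the m-dimensional affine space over F: the (left) vector space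
   F^(m) of finitely supported coordinate vectors nat -> F, with support
   contained in {0,...,k-1} when m = Some k. *)
Definition isPt (F : unitRingType) (m : affdim) (v : nat -> F) : Prop :=
  (exists N : nat, forall i : nat, (N <= i)%N -> v i = 0) /\
  (forall k : nat, m = Some k -> forall i : nat, (k <= i)%N -> v i = 0).

Definition isLine (F : unitRingType) (m : affdim) (S : (nat -> F) -> Prop) : Prop :=
  exists p v : nat -> F, isPt m p /\ isPt m v /\ v <> (fun _ => 0) /\
    forall x : nat -> F, S x <-> exists t : F, x = (fun i => p i + t * v i).

Definition related (F : unitRingType) (a b : (nat -> F) -> Prop) : Prop :=
  exists x, a x /\ b x.

Definition adjacent (F : unitRingType) (a b : (nat -> F) -> Prop) : Prop :=
  related a b /\ a <> b.

(* Main.v *)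
Require Import Defs.
From mathcomp Require Import all_boot all_order all_algebra.
From Stdlib Require Import Classical ClassicalEpsilon FunctionalExtensionality PropExtensionality.
From Stdlib Require List.
Set Implicit Arguments. Unset Strict Implicit. Unset Printing Implicit Defensive.
Import GRing.Theory.
Local Open Scope ring_scope.

Lemma ring_key (R : unitRingType) (P V P' X t1 t2 s1 s2 s : R) :
  (s2 - s1) \is a GRing.unit -> P + t1*V = P' + s1*X -> P + t2*V = P' + s2*X ->
  P' + s*X = P + (t1 + (s-s1)*((s2-s1)^-1*(t2-t1)))*V.
Proof.
move=> U H1 H2.
have E : (s2-s1)*X = (t2-t1)*V.
  rewrite !mulrBl.
  have -> : s2*X - s1*X = (P'+s2*X) - (P'+s1*X) by rewrite opprD addrACA subrr add0r.
  by rewrite -H1 -H2 opprD addrACA subrr add0r.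
have EX : X = (s2-s1)^-1 * ((t2-t1)*V) by rewrite -E mulKr.
have EP : P' = P + t1*V - s1*X by rewrite H1 addrK.
rewrite EP. rewrite (@mulrDl R t1 _ V).
rewrite -!mulrA -EX mulrBl.
by rewrite -!addrA; congr (_ + (_ + _)); rewrite addrC.
Qed.

Definition lin (F : unitRingType) (p v : nat -> F) : (nat -> F) -> Prop :=
  fun x => exists t : F, x = (fun i => p i + t * v i).

Definition vsub (F : unitRingType) (q p : nat -> F) : nat -> F := fun i => q i - p i.

Lemma fapp (A B : Type) (f g : A -> B) x : f = g -> f x = g x.
Proof. by move->. Qed.

Lemma lin_mem0 (F : unitRingType) (p v : nat -> F) : lin p v p.
Proof. by exists 0; apply: functional_extensionality => i; rewrite mul0r addr0. Qed.

Lemma lin_mem1 (F : unitRingType) (p q : nat -> F) : lin p (vsub q p) q.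
Proof. by exists 1; apply: functional_extensionality => i; rewrite mul1r /vsub addrC subrK. Qed.

Lemma KL (F : unitRingType) (hF : skew_field F) (p v p' v' a w : nat -> F) :
  lin p v a -> lin p v w -> lin p' v' a -> lin p' v' w -> a <> w ->
  forall z, lin p' v' z -> lin p v z.
Proof.
move=> [t1 Ha1] [t2 Hw1] [s1 Ha2] [s2 Hw2] naw z [s ->].
have ns : s2 - s1 != 0.
  rewrite subr_eq0; apply/eqP => E; apply: naw; by rewrite Ha2 Hw2 E.
exists (t1 + (s-s1)*((s2-s1)^-1*(t2-t1))).
apply: functional_extensionality => i.
apply: ring_key; first exact: hF.
- by have := fapp i (etrans (esym Ha1) Ha2).
- by have := fapp i (etrans (esym Hw1) Hw2).
Qed.

Lemma LinesEq (F : unitRingType) (hF : skew_field F) (p v p' v' x y : nat -> F) :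
  lin p v x -> lin p v y -> lin p' v' x -> lin p' v' y -> x <> y ->
  forall z, lin p v z <-> lin p' v' z.
Proof.
move=> h1 h2 h3 h4 nxy z; split; first exact: (KL hF h3 h4 h1 h2 nxy).
exact: (KL hF h1 h2 h3 h4 nxy).
Qed.

Lemma nz_exists (F : unitRingType) (v : nat -> F) : v <> (fun _ => 0) -> exists i, v i != 0.
Proof.
move=> hv; apply: NNPP => H; apply: hv; apply: functional_extensionality => i.
case: (eqVneq (v i) 0) => // Hi; exfalso; apply: H; by exists i.
Qed.

Lemma lin_inj (F : unitRingType) (hF : skew_field F) (p v : nat -> F) (t1 t2 : F) :
  v <> (fun _ => 0) ->
  (fun i => p i + t1 * v i) = (fun i => p i + t2 * v i) -> t1 = t2.
Proof.
move=> /nz_exists [i hi] E; have := fapp i E => /addrI.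
exact: (mulIr (hF _ hi)).
Qed.

Lemma isPt_lin (F : unitRingType) m (p v : nat -> F) t :
  isPt m p -> isPt m v -> isPt m (fun i => p i + t * v i).
Proof.
move=> [[N1 h1] d1] [[N2 h2] d2]; split.
  exists (maxn N1 N2) => i; rewrite geq_max => /andP [hi1 hi2].
  by rewrite h1 // h2 // mulr0 addr0.
by move=> k hk i hi; rewrite (d1 k hk i hi) (d2 k hk i hi) mulr0 addr0.
Qed.

Lemma isPt_vsub (F : unitRingType) m (p q : nat -> F) :
  isPt m p -> isPt m q -> isPt m (vsub q p).
Proof.
move=> [[N1 h1] d1] [[N2 h2] d2]; split.
  exists (maxn N1 N2) => i; rewrite geq_max => /andP [hi1 hi2].
  by rewrite /vsub h1 // h2 // subr0.
by move=> k hk i hi; rewrite /vsub (d1 k hk i hi) (d2 k hk i hi) subr0.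
Qed.

Lemma vsub_nz (F : unitRingType) (p q : nat -> F) : q <> p -> vsub q p <> (fun _ => 0).
Proof.
move=> nqp E; apply: nqp; apply: functional_extensionality => i.
by apply/eqP; rewrite -subr_eq0; have := fapp i E; rewrite /vsub => ->.
Qed.

Lemma isLine_lin (F : unitRingType) m (p v : nat -> F) :
  isPt m p -> isPt m v -> v <> (fun _ => 0) -> isLine m (lin p v).
Proof. by move=> *; exists p, v. Qed.

Lemma isLine_dec (F : unitRingType) m (l : (nat -> F) -> Prop) :
  isLine m l -> exists p v, isPt m p /\ isPt m v /\ v <> (fun _ => 0) /\ forall x, l x <-> lin p v x.
Proof. by []. Qed.

Lemma F2_cases (t : 'F_2) : t = 0 \/ t = 1.
Proof. case: t => [[|[|n]] Hn]; [left|right|by []]; exact: val_inj. Qed.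

Lemma F2_skew : skew_field 'F_2.
Proof. by move=> x hx; rewrite unitfE. Qed.

Lemma A2rep (a : (nat -> 'F_2) -> Prop) (p : nat -> 'F_2) :
  isLine None a -> a p ->
  exists r, r <> p /\ isPt None r /\ isPt None p /\ forall x, a x <-> x = p \/ x = r.
Proof.
move=> [p0 [v0 [hp0 [hv0 [nv0 ha]]]]] /ha [t ->].
set f := fun t : 'F_2 => (fun i => p0 i + t * v0 i).
have hf : forall x, a x <-> x = f 0 \/ x = f 1.
  move=> x; rewrite ha; split.
    by move=> [s ->]; case: (F2_cases s) => ->; [left|right].
  by case=> ->; [exists 0 | exists 1].
have nf : f 0 <> f 1 by move/(lin_inj F2_skew nv0).
have pf : forall s, isPt None (f s) by move=> s; exact: isPt_lin.
case: (F2_cases t) => ->.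
- exists (f 1); split; first by move=> E; apply: nf.
  split; [exact: pf | split; [exact: pf|]]; move=> x; rewrite hf; tauto.
- exists (f 0); split; first by move=> E; apply: nf.
  split; [exact: pf | split; [exact: pf|]]; move=> x; rewrite hf; tauto.
Qed.

Fixpoint bit (n i : nat) : bool := if i is i'.+1 then bit n./2 i' else odd n.

Definition enc (n : nat) : nat -> 'F_2 := fun i => (bit n i)%:R.

Lemma bit_small i n : (n <= i)%N -> bit n i = false.
Proof.
elim: i n => [|i IH] n hn /=; first by move: hn; rewrite leqn0 => /eqP ->.
apply: IH; rewrite leq_half_double; apply: leq_trans hn _.
by rewrite ltnS -addnn leq_addr.
Qed.

Lemma enc_pt n : isPt None (enc n).
Proof. split => // ; exists n => i hi; by rewrite /enc bit_small. Qed.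

Lemma boolF2 (b c : bool) : (b%:R : 'F_2) = c%:R -> b = c.
Proof. by case: b; case: c => //= /eqP; rewrite ?oner_eq0 // eq_sym oner_eq0. Qed.

Lemma half_lt n : (0 < n)%N -> (n./2 < n)%N.
Proof. move=> hn; rewrite ltn_half_double -addnn; by rewrite -{1}[n]addn0 ltn_add2l. Qed.

Lemma bit_inj N : forall n m, (n + m < N)%N -> (forall i, bit n i = bit m i) -> n = m.
Proof.
elim: N => [|N IH] n m // hN hb.
case: (posnP (n + m)) => [|hpos].
  by move/eqP; rewrite addn_eq0 => /andP [/eqP -> /eqP ->].
rewrite -[n]odd_double_half -[m]odd_double_half.
have -> : odd n = odd m by exact: (hb 0%N).
congr (_ + _.*2); apply: IH; last by move=> i; exact: (hb i.+1).
have h1 : (n./2 <= n)%N by rewrite leq_half_double; apply: leqW; rewrite -addnn leq_addr.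
have h2 : (m./2 <= m)%N by rewrite leq_half_double; apply: leqW; rewrite -addnn leq_addr.
have hlt : (n./2 + m./2 < n + m)%N.
  case: (posnP n) => [hn0|hn].
    by subst n; rewrite add0n in hpos *; apply: half_lt.
  by rewrite -addSn leq_add // half_lt.
by apply: leq_trans hlt _; rewrite -ltnS.
Qed.

Lemma enc_inj n m : enc n = enc m -> n = m.
Proof.
move=> E; apply: (bit_inj (N := (n + m).+1)) => // i.
apply: boolF2; exact: (fapp i E).
Qed.

Lemma enc_surj (p : nat -> 'F_2) : isPt None p -> exists n, enc n = p.
Proof.
move=> [[N hN] _]; elim: N p hN => [|N IH] p hN.
  exists 0%N; apply: functional_extensionality => i.
  by rewrite /enc bit_small // hN.
have [n' hn'] := IH (fun i => p i.+1) (fun i hi => hN i.+1 hi).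
exists (nat_of_bool (p 0%N == 1%R) + n'.*2)%N; apply: functional_extensionality => [[|i]].
  rewrite /enc /= oddD odd_double addbF.
  by case: (F2_cases (p 0%N)) => ->; rewrite ?eqxx //.
by rewrite /enc /= half_bit_double -(fapp i hn').
Qed.

Lemma In_mem (T : eqType) (x : T) (s : seq T) : List.In x s -> x \in s.
Proof.
elim: s => //= y s IH [->|/IH h]; rewrite inE ?eqxx //.
by rewrite h orbT.
Qed.

Lemma pigeon (F : eqType) (e : nat -> F) : injective e ->
  forall s : seq F, exists t, ~ List.In t s.
Proof.
move=> he s; apply: NNPP => H.
have hs : {subset map e (iota 0 (size s).+1) <= s}.
  move=> x /mapP [i _ ->]; apply: In_mem; apply: NNPP => H'; apply: H; by exists (e i).
have hu : uniq (map e (iota 0 (size s).+1)) by rewrite (map_inj_uniq he) iota_uniq.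
have := uniq_leq_size hu hs.
by rewrite size_map size_iota ltnn.
Qed.

Lemma avoid (F : unitRingType) (e : nat -> F) (he : injective e) (Ps : list (F -> Prop)) :
  (forall P, List.In P Ps -> forall t1 t2, P t1 -> P t2 -> t1 = t2) ->
  exists t, forall P, List.In P Ps -> ~ P t.
Proof.
move=> hP; have [t ht] := pigeon he (List.map (fun P => epsilon (inhabits 0) P) Ps).
exists t => P hin Pt; apply: ht; apply/List.in_map_iff; exists P; split => //.
apply: (hP P hin) => //; apply: epsilon_spec; by exists t.
Qed.

Definition has2 (F : unitRingType) (L : (nat -> F) -> Prop) (B : list (nat -> F)) :=
  exists x y, x <> y /\ List.In x B /\ List.In y B /\ L x /\ L y.

Definition valid (F : unitRingType) m (pv : (nat -> F) * (nat -> F)) :=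
  isPt m pv.1 /\ isPt m pv.2 /\ pv.2 <> (fun _ => 0).

Definition Good (F : unitRingType) m (B : list (nat -> F)) (pv : (nat -> F) * (nat -> F)) z :=
  lin pv.1 pv.2 z /\ isPt m z /\ ~ List.In z B /\
  forall x y, List.In x B -> List.In y B -> x <> y ->
    forall l, isLine m l -> l x -> l y -> ~ l z.

Lemma exists_good (F : unitRingType) m (hF : skew_field F) (e : nat -> F) (he : injective e)
  (B : list (nat -> F)) pv :
  valid m pv -> ~ has2 (lin pv.1 pv.2) B -> exists z, Good m B pv z.
Proof.
case: pv => p v [/= hp [hv nv]] /= nh.
set f := fun t : F => fun i => p i + t * v i.
pose Ps := List.map (fun x => fun t => f t = x) B ++
  List.flat_map (fun x => List.map (fun y => fun t => x <> y /\ lin x (vsub y x) (f t)) B) B.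
have hP : forall P, List.In P Ps -> forall t1 t2, P t1 -> P t2 -> t1 = t2.
  move=> P /List.in_app_iff [/List.in_map_iff [x [<- _]] |
     /List.in_flat_map [x [hx /List.in_map_iff [y [<- hy]]]]] t1 t2 /=.
    by move=> h1 h2; apply: (lin_inj hF nv); exact: (etrans h1 (esym h2)).
  move=> [nxy h1] [_ h2]; apply: NNPP => nt; apply: nh.
  have nf : f t1 <> f t2 by move/(lin_inj hF nv).
  exists x, y; do 3 split => //.
  have L1 : lin p v (f t1) by exists t1.
  have L2 : lin p v (f t2) by exists t2.
  split.
    exact: (KL hF L1 L2 h1 h2 nf (lin_mem0 _ _)).
  exact: (KL hF L1 L2 h1 h2 nf (lin_mem1 _ _)).
have [t ht] := avoid he hP.
exists (f t); split; first by exists t.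
split; first exact: isPt_lin.
split.
  move=> hin; apply: (ht (fun t' => f t' = f t)) => //.
  apply: List.in_or_app; left; exact: (List.in_map (fun x => fun t' => f t' = x) _ _ hin).
move=> x y hx hy nxy l [p' [v' [_ [_ [_ hl']]]]] lx ly lz.
apply: (ht (fun t' => x <> y /\ lin x (vsub y x) (f t'))).
  apply: List.in_or_app; right; apply/List.in_flat_map; exists x; split => //.
  exact: (List.in_map (fun y => fun t' => x <> y /\ lin x (vsub y x) (f t')) _ _ hy).
split => //.
exact: (KL hF (lin_mem0 x (vsub y x)) (lin_mem1 x y) ((hl' x).1 lx) ((hl' y).1 ly) nxy ((hl' _).1 lz)).
Qed.

Definition okd (m : affdim) (i : nat) : bool := if m is Some k then (i < k)%N else true.

Definition ptE (F : unitRingType) (m : affdim) (e : nat -> F) (s : seq nat) : nat -> F :=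
  fun i => if okd m i then nth 0 (map e s) i else 0.

Lemma ptE_pt (F : unitRingType) m (e : nat -> F) s : isPt m (ptE m e s).
Proof.
split.
  exists (size s) => i hi; rewrite /ptE; case: okd => //.
  by rewrite nth_default // size_map.
by move=> k hk i hi; rewrite /ptE hk /= ltnNge hi.
Qed.

Lemma ptE_surj (F : unitRingType) m (e : nat -> F) g : cancel g e ->
  forall q, isPt m q -> exists s, ptE m e s = q.
Proof.
move=> gK q [[N hN] hd]; exists (map (fun i => g (q i)) (iota 0 N)).
apply: functional_extensionality => i; rewrite /ptE.
case hok : (okd m i); last first.
  by move: hok; case: m hd => //= k hd; rewrite ltnNge => /negbFE hi; rewrite (hd k).
rewrite -map_comp (@eq_map _ _ _ q); last by move=> j /=; rewrite gK.
case: (ltnP i N) => hi.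
  by rewrite (nth_map 0%N) ?size_iota // nth_iota.
by rewrite nth_default ?size_map ?size_iota // hN.
Qed.

Definition lidx (F : unitRingType) m (e : nat -> F) (n : nat) : (nat -> F) * (nat -> F) :=
  match (unpickle n : option (seq nat * seq nat * bool)) with
  | Some (s1, s2, _) => (ptE m e s1, ptE m e s2)
  | None => (fun _ => 0, fun _ => 0)
  end.

Lemma lidx_pickle (F : unitRingType) m (e : nat -> F) s1 s2 (c : bool) :
  lidx m e (pickle (s1, s2, c)) = (ptE m e s1, ptE m e s2).
Proof. by rewrite /lidx pickleK. Qed.

Definition ek (F : unitRingType) (k : nat) : nat -> F := fun i => if i == k then 1 else 0.
Arguments ek {F}.

Definition fallback (F : unitRingType) (B : list (nat -> F)) : (nat -> F) * (nat -> F) :=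
  ((fun i => epsilon (inhabits 0) (fun t => ~ List.In t (List.map (fun x => x 1%N) B)) * ek 1 i),
   ek 0).

Definition target (F : unitRingType) m (e : nat -> F) (B : list (nat -> F)) (n : nat) :=
  if excluded_middle_informative
       (valid m (lidx m e n) /\ ~ has2 (lin (lidx m e n).1 (lidx m e n).2) B)
  then lidx m e n else fallback B.

Definition newpt (F : unitRingType) m (e : nat -> F) (B : list (nat -> F)) (n : nat) : nat -> F :=
  epsilon (inhabits (fun _ => 0)) (Good m B (target m e B n)).

Fixpoint Bs (F : unitRingType) m (e : nat -> F) (n : nat) : list (nat -> F) :=
  match n with
  | 0 => nil
  | n'.+1 => Bs m e n' ++ (newpt m e (Bs m e n') n' :: nil)
  end.

Definition bb (F : unitRingType) m (e : nat -> F) (n : nat) := newpt m e (Bs m e n) n.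

Lemma ek_pt (F : unitRingType) m k : okd m k ->
  isPt m (ek (F := F) k).
Proof.
move=> hk; split.
  exists k.+1 => i hi; rewrite /ek; case: eqP => // E; by rewrite E ltnn in hi.
move=> d hd i hi; subst m; rewrite /ek; case: eqP => // E; subst i; rewrite /okd in hk.
by rewrite leqNgt hk in hi.
Qed.

Lemma isPt_scale (F : unitRingType) m (v : nat -> F) t : isPt m v -> isPt m (fun i => t * v i).
Proof.
move=> [[N h] d]; split; first by exists N => i hi; rewrite h // mulr0.
by move=> k hk i hi; rewrite (d k hk i hi) mulr0.
Qed.

Lemma target_ok (F : unitRingType) m (e : nat -> F) (he : injective e)
  (hm : if m is Some k then (3 <= k)%N else true) B n :
  valid m (target m e B n) /\ ~ has2 (lin (target m e B n).1 (target m e B n).2) B.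
Proof.
have hk0 : okd m 0 by rewrite /okd; case: m hm => // k hk; apply: leq_trans hk.
have hk1 : okd m 1 by rewrite /okd; case: m hm {hk0} => // k hk; apply: leq_trans hk.
rewrite /target; destruct (excluded_middle_informative _) as [h|h0]; first exact: h.
rewrite /fallback /valid /=.
have hs := epsilon_spec (inhabits 0) (fun t => ~ List.In t (List.map (fun x => x 1%N) B)) (pigeon he _).
set s := epsilon _ _ in hs *.
cbn [fst snd].
split.
  split; first by apply: isPt_scale; apply: ek_pt.
  split; first by apply: ek_pt.
  move=> E; have := fapp 0%N E; rewrite /ek /= => /eqP; by rewrite oner_eq0.
move=> [x [y [_ [hx [_ [[t Ex] _]]]]]]; apply: hs.
have := List.in_map (fun x => x 1%N) _ _ hx; rewrite Ex /ek /=.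
by rewrite mulr1 mulr0 addr0.
Qed.

Lemma b_good (F : unitRingType) m (hF : skew_field F) (e : nat -> F) (he : injective e)
  (hm : if m is Some k then (3 <= k)%N else true) n :
  Good m (Bs m e n) (target m e (Bs m e n) n) (bb m e n).
Proof.
apply: epsilon_spec; have [h1 h2] := target_ok (e := e) he hm (Bs m e n) n.
exact: exists_good hF e he _ _ h1 h2.
Qed.

Lemma Bs_in (F : unitRingType) m (e : nat -> F) n x :
  List.In x (Bs m e n) <-> exists i, (i < n)%N /\ x = bb m e i.
Proof.
elim: n => [|n IH] /=.
  by split => // [[i []]].
rewrite List.in_app_iff IH /=; split.
  case=> [[i [hi ->]]|[<-|[]]]; first by exists i; split => //; apply: ltnW.
  by exists n.
move=> [i [hi ->]]; rewrite ltnS leq_eqVlt in hi; case/orP: hi => [/eqP ->|hi].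
  by right; left.
by left; exists i.
Qed.

Lemma bb_pt (F : unitRingType) m (hF : skew_field F) (e : nat -> F) (he : injective e)
  (hm : if m is Some k then (3 <= k)%N else true) n : isPt m (bb m e n).
Proof. by have [_ [h _]] := b_good hF he hm n. Qed.

Lemma bb_new (F : unitRingType) m (hF : skew_field F) (e : nat -> F) (he : injective e)
  (hm : if m is Some k then (3 <= k)%N else true) i j : (i < j)%N -> bb m e i <> bb m e j.
Proof.
move=> hij E; have [_ [_ [h _]]] := b_good hF he hm j; apply: h.
by apply/Bs_in; exists i; split.
Qed.

Lemma bb_inj (F : unitRingType) m (hF : skew_field F) (e : nat -> F) (he : injective e)
  (hm : if m is Some k then (3 <= k)%N else true) i j : bb m e i = bb m e j -> i = j.
Proof.
move=> E; case: (ltngtP i j) => // h.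
  by case: (bb_new hF he hm h).
by case: (bb_new hF he hm h).
Qed.

Lemma no3 (F : unitRingType) m (hF : skew_field F) (e : nat -> F) (he : injective e)
  (hm : if m is Some k then (3 <= k)%N else true) l : isLine m l ->
  forall i j k, l (bb m e i) -> l (bb m e j) -> l (bb m e k) ->
    bb m e i = bb m e j \/ bb m e i = bb m e k \/ bb m e j = bb m e k.
Proof.
move=> hl.
have H : forall x y z, (x < z)%N -> (y < z)%N -> l (bb m e x) -> l (bb m e y) -> l (bb m e z) ->
    bb m e x <> bb m e y -> False.
  move=> x y z hx hy lx ly lz nxy; have [_ [_ [_ h]]] := b_good hF he hm z.
  apply: (h (bb m e x) (bb m e y) _ _ nxy l hl lx ly lz); apply/Bs_in.
  - by exists x.
  - by exists y.
move=> i j k li lj lk; apply: NNPP => hn.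
have nij : bb m e i <> bb m e j by tauto.
have nik : bb m e i <> bb m e k by tauto.
have njk : bb m e j <> bb m e k by tauto.
have [hik|hik|hik] := ltngtP i k; last by subst.
- have [hjk|hjk|hjk] := ltngtP j k; last by subst.
  + exact: (H i j k).
  + exact: (H i k j (ltn_trans hik hjk)).
- have [hij|hij|hij] := ltngtP i j; last by subst.
  + exact: (H i k j hij (ltn_trans hik hij)).
  + exact: (H j k i hij hik).
Qed.

Lemma sat (F : unitRingType) m (hF : skew_field F) (e : nat -> F) (he : injective e)
  (hm : if m is Some k then (3 <= k)%N else true) g (gK : cancel g e) l : isLine m l ->
  exists i j, bb m e i <> bb m e j /\ l (bb m e i) /\ l (bb m e j).
Proof.
move=> [p [v [hp [hv [nv hl]]]]].
have [s1 E1] := ptE_surj gK hp.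
have [s2 E2] := ptE_surj gK hv.
have hval : valid m (p, v) by [].
have step1 : forall n, lidx m e n = (p, v) ->
    exists x, List.In x (Bs m e n.+1) /\ lin p v x.
  move=> n hn; have [_ [_ [_ hgood]]] := b_good hF he hm n.
  case: (classic (has2 (lin p v) (Bs m e n))) => [[x [_ [_ [hx [_ [lx _]]]]]]|nh].
    by exists x; split => //=; apply: List.in_or_app; left.
  have ht : target m e (Bs m e n) n = (p, v).
    by rewrite /target hn; case: excluded_middle_informative => // h; exfalso; apply: h.
  have [lz _] := b_good hF he hm n; rewrite ht in lz.
  exists (bb m e n); split => //=; apply: List.in_or_app; right; by left.
have step2 : forall n, lidx m e n = (p, v) ->
    (exists x, List.In x (Bs m e n) /\ lin p v x) -> has2 (lin p v) (Bs m e n.+1).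
  move=> n hn [x [hx lx]].
  case: (classic (has2 (lin p v) (Bs m e n))) => [[a [b [nab [ha [hb [la lb]]]]]]|nh].
    exists a, b; split => //; split; first by apply: List.in_or_app; left.
    by split; first by apply: List.in_or_app; left.
  have ht : target m e (Bs m e n) n = (p, v).
    by rewrite /target hn; case: excluded_middle_informative => // h; exfalso; apply: h.
  have [lz [_ [nz _]]] := b_good hF he hm n; rewrite ht in lz.
  exists x, (bb m e n); split; first by move=> E; apply: nz; rewrite -E.
  split; first by apply: List.in_or_app; left.
  split; first by apply: List.in_or_app; right; left.
  by [].
pose n1 := pickle (s1, s2, false); pose n2 := pickle (s1, s2, true).
have h1 : lidx m e n1 = (p, v) by rewrite lidx_pickle E1 E2.
have h2 : lidx m e n2 = (p, v) by rewrite lidx_pickle E1 E2.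
have n12 : n1 != n2.
  apply/eqP => /(pcan_inj pickleK); by case.
have mono : forall a b x, (a <= b)%N -> List.In x (Bs m e a) -> List.In x (Bs m e b).
  move=> a b x hab /Bs_in [i [hi ->]]; apply/Bs_in; exists i; split => //.
  exact: leq_trans hi hab.
have fin : forall a b, lidx m e a = (p, v) -> lidx m e b = (p, v) -> (a < b)%N ->
    has2 (lin p v) (Bs m e b.+1).
  move=> a b ha hb hab; apply: step2 => //.
  have [x [hx lx]] := step1 a ha; exists x; split => //; exact: mono hx.
have : exists N, has2 (lin p v) (Bs m e N).
  case: (ltngtP n1 n2) => hlt.
  - by exists n2.+1; apply: (fin n1).
  - by exists n1.+1; apply: (fin n2).
  - by rewrite hlt eqxx in n12.
move=> [N [x [y [nxy [/Bs_in [i [_ Ex]] [/Bs_in [j [_ Ey]] [lx ly]]]]]]].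
subst x y; exists i, j; split; [exact: nxy | split; apply/hl => //].
Qed.

Definition idx (p : nat -> 'F_2) : nat := epsilon (inhabits 0%N) (fun n => enc n = p).
Definition lamf (F : unitRingType) m (e : nat -> F) (p : nat -> 'F_2) : nat -> F := bb m e (idx p).
Definition Bset (F : unitRingType) m (e : nat -> F) (q : nat -> F) := exists n, q = bb m e n.
Definition phif (F : unitRingType) m (e : nat -> F) (a : (nat -> 'F_2) -> Prop) : (nat -> F) -> Prop :=
  fun w => exists p q, a p /\ a q /\ p <> q /\ lin (lamf m e p) (vsub (lamf m e q) (lamf m e p)) w.

Lemma enc_idx p : isPt None p -> enc (idx p) = p.
Proof. move=> hp; exact: (epsilon_spec (inhabits 0%N) (fun n => enc n = p) (enc_surj hp)). Qed.

Lemma idx_enc n : idx (enc n) = n.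
Proof. apply: enc_inj; apply: enc_idx; exact: enc_pt. Qed.

Lemma lam_inj (F : unitRingType) m (hF : skew_field F) (e : nat -> F) (he : injective e)
  (hm : if m is Some k then (3 <= k)%N else true) p1 p2 :
  isPt None p1 -> isPt None p2 -> lamf m e p1 = lamf m e p2 -> p1 = p2.
Proof.
move=> h1 h2 /(bb_inj hF he hm) E.
by rewrite -(enc_idx h1) -(enc_idx h2) E.
Qed.

Lemma lam_B (F : unitRingType) m (e : nat -> F) q :
  Bset m e q <-> exists p, isPt None p /\ q = lamf m e p.
Proof.
split.
  move=> [n ->]; exists (enc n); split; first exact: enc_pt.
  by rewrite /lamf idx_enc.
by move=> [p [_ ->]]; exists (idx p).
Qed.

Lemma lamB (F : unitRingType) m (e : nat -> F) p : Bset m e (lamf m e p).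
Proof. by exists (idx p). Qed.

Lemma no3B (F : unitRingType) m (hF : skew_field F) (e : nat -> F) (he : injective e)
  (hm : if m is Some k then (3 <= k)%N else true) l : isLine m l ->
  forall x y z, Bset m e x -> Bset m e y -> Bset m e z -> l x -> l y -> l z ->
    x = y \/ x = z \/ y = z.
Proof.
move=> hl x y z [i ->] [j ->] [k ->]; exact: (no3 hF he hm hl).
Qed.

Lemma lam_line (F : unitRingType) m (hF : skew_field F) (e : nat -> F) (he : injective e)
  (hm : if m is Some k then (3 <= k)%N else true) p q :
  isPt None p -> isPt None q -> p <> q ->
  isLine m (lin (lamf m e p) (vsub (lamf m e q) (lamf m e p))).
Proof.
move=> hp hq npq; apply: isLine_lin.
- exact: bb_pt.
- apply: isPt_vsub; exact: bb_pt.
- apply: vsub_nz => E; apply: npq; apply: (lam_inj hF he hm) => //.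
Qed.

Lemma phi_char (F : unitRingType) m (hF : skew_field F) (e : nat -> F) (he : injective e)
  (hm : if m is Some k then (3 <= k)%N else true) a p0 q0 :
  (forall x, a x <-> x = p0 \/ x = q0) -> p0 <> q0 -> isPt None p0 -> isPt None q0 ->
  forall w, phif m e a w <-> lin (lamf m e p0) (vsub (lamf m e q0) (lamf m e p0)) w.
Proof.
move=> ha npq hp hq w; split; last first.
  by move=> hw; exists p0, q0; split; [apply/ha; tauto | split; [apply/ha; tauto | split]].
move=> [p [q [/ha hpa [/ha hqa [npq' hw]]]]].
have nl : lamf m e p0 <> lamf m e q0 by move/(lam_inj hF he hm hp hq).
case: hpa => E1; case: hqa => E2; subst p q => //.
apply/(LinesEq hF _ _ (lin_mem1 (lamf m e q0) (lamf m e p0)) (lin_mem0 _ _) nl) => //.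
- exact: lin_mem0.
- exact: lin_mem1.
Qed.

Lemma a_point (a : (nat -> 'F_2) -> Prop) : isLine None a -> exists p, a p.
Proof. move=> [p0 [v0 [_ [_ [_ ha]]]]]; exists p0; apply/ha; exact: lin_mem0. Qed.

Lemma phi_line (F : unitRingType) m (hF : skew_field F) (e : nat -> F) (he : injective e)
  (hm : if m is Some k then (3 <= k)%N else true) a :
  isLine None a -> isLine m (phif m e a).
Proof.
move=> hA; have [p0 ap] := a_point hA.
have [r [nrp [hr [hp ha]]]] := A2rep hA ap.
have [P [V [h1 [h2 [h3 h4]]]]] := lam_line hF he hm hp hr (nesym nrp).
exists P, V; do 3 (split => //).
move=> x; rewrite (phi_char hF he hm ha (nesym nrp) hp hr); exact: h4.
Qed.

Lemma sub_pts (F : unitRingType) m (hF : skew_field F) (e : nat -> F) (he : injective e)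
  (hm : if m is Some k then (3 <= k)%N else true) a b p0 q0 p1 q1 :
  (forall x, a x <-> x = p0 \/ x = q0) -> p0 <> q0 -> isPt None p0 -> isPt None q0 ->
  (forall x, b x <-> x = p1 \/ x = q1) -> p1 <> q1 -> isPt None p1 -> isPt None q1 ->
  (forall w, phif m e a w -> phif m e b w) ->
  forall x, x = p0 \/ x = q0 -> x = p1 \/ x = q1.
Proof.
move=> ha n0 hp0 hq0 hb n1 hp1 hq1 hab x hx.
have hxp : isPt None x by case: hx => ->.
have hlx : phif m e b (lamf m e x).
  apply: hab; apply/(phi_char hF he hm ha n0 hp0 hq0).
  case: hx => ->; [exact: lin_mem0 | exact: lin_mem1].
move/(phi_char hF he hm hb n1 hp1 hq1): hlx => hlx.
have hL := lam_line hF he hm hp1 hq1 n1.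
have := no3B hF he hm hL (lamB m e x) (lamB m e p1) (lamB m e q1) hlx (lin_mem0 _ _) (lin_mem1 _ _).
case=> [E|[E|E]].
- by left; apply: (lam_inj hF he hm).
- by right; apply: (lam_inj hF he hm).
- by case: n1; apply: (lam_inj hF he hm).
Qed.

Lemma phi_inj (F : unitRingType) m (hF : skew_field F) (e : nat -> F) (he : injective e)
  (hm : if m is Some k then (3 <= k)%N else true) a b :
  isLine None a -> isLine None b -> phif m e a = phif m e b -> a = b.
Proof.
move=> hA hB E.
have [p0 ap] := a_point hA; have [q0 [n0 [hq0 [hp0 ha]]]] := A2rep hA ap.
have [p1 bp] := a_point hB; have [q1 [n1 [hq1 [hp1 hb]]]] := A2rep hB bp.
apply: functional_extensionality => x; apply: propositional_extensionality.
rewrite ha hb; split.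
  apply: (sub_pts hF he hm ha (nesym n0) hp0 hq0 hb (nesym n1) hp1 hq1).
  by move=> w; rewrite E.
apply: (sub_pts hF he hm hb (nesym n1) hp1 hq1 ha (nesym n0) hp0 hq0).
by move=> w; rewrite E.
Qed.

Lemma rep2 (p q : nat -> 'F_2) x : lin p (vsub q p) x <-> x = p \/ x = q.
Proof.
split; last by case=> ->; [exact: lin_mem0 | exact: lin_mem1].
move=> [t ->]; case: (F2_cases t) => ->; [left|right];
  apply: functional_extensionality => i.
  by rewrite mul0r addr0.
by rewrite mul1r /vsub addrC subrK.
Qed.

Lemma exactly_two (F : unitRingType) m (hF : skew_field F) (e : nat -> F) (he : injective e)
  (hm : if m is Some k then (3 <= k)%N else true) g (gK : cancel g e) l :
  isLine m l -> exists x y, x <> y /\ l x /\ l y /\ Bset m e x /\ Bset m e y /\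
          forall z, l z -> Bset m e z -> z = x \/ z = y.
Proof.
move=> hl; have [i [j [nij [li lj]]]] := sat hF he hm gK hl.
exists (bb m e i), (bb m e j).
split; first exact: nij.
split; first exact: li.
split; first exact: lj.
split; first by exists i.
split; first by exists j.
move=> z lz bz.
have := no3B hF he hm hl bz (ex_intro _ i erefl) (ex_intro _ j erefl) lz li lj.
by case=> [E|[E|E]]; [left | right | case: nij].
Qed.

Lemma phi_surj (F : unitRingType) m (hF : skew_field F) (e : nat -> F) (he : injective e)
  (hm : if m is Some k then (3 <= k)%N else true) g (gK : cancel g e) l :
  isLine m l -> exists a, isLine None a /\ phif m e a = l.
Proof.
move=> hl; have [i [j [nij [li lj]]]] := sat hF he hm gK hl.
have lpi : lamf m e (enc i) = bb m e i by rewrite /lamf idx_enc.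
have lpj : lamf m e (enc j) = bb m e j by rewrite /lamf idx_enc.
have npq : enc i <> enc j by move=> E; apply: nij; rewrite -lpi -lpj E.
exists (lin (enc i) (vsub (enc j) (enc i))); split.
  apply: isLine_lin; [exact: enc_pt | apply: isPt_vsub; exact: enc_pt | exact: vsub_nz (nesym npq)].
apply: functional_extensionality => w; apply: propositional_extensionality.
rewrite (phi_char hF he hm (rep2 (enc i) (enc j)) npq (enc_pt _) (enc_pt _)).
have [P [V [_ [_ [_ hP]]]]] := hl.
rewrite hP lpi lpj.
apply: (LinesEq hF (lin_mem0 _ _) (lin_mem1 _ _) _ _ nij); apply/hP => //.
Qed.

Lemma phi_rel (F : unitRingType) m (hF : skew_field F) (e : nat -> F) (he : injective e)
  (hm : if m is Some k then (3 <= k)%N else true) a p :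
  isLine None a -> a p -> phif m e a (lamf m e p).
Proof.
move=> hA ap; have [r [nr [hr [hp ha]]]] := A2rep hA ap.
apply/(phi_char hF he hm ha (nesym nr) hp hr); exact: lin_mem0.
Qed.

Lemma phi_spec (F : unitRingType) m (hF : skew_field F) (e : nat -> F) (he : injective e)
  (hm : if m is Some k then (3 <= k)%N else true) a b p :
  isLine None a -> isLine None b -> adjacent a b -> a p -> b p ->
  forall q, (phif m e a q /\ phif m e b q) <-> q = lamf m e p.
Proof.
move=> hA hB [_ nab] ap bp q; split; last first.
  by move=> ->; split; apply: (phi_rel hF he hm).
move=> [qa qb]; apply: NNPP => nq.
have [r [nr [hr [hp ha]]]] := A2rep hA ap.
have [r' [nr' [hr' [_ hb]]]] := A2rep hB bp.
move/(phi_char hF he hm ha (nesym nr) hp hr): qa => qa.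
move/(phi_char hF he hm hb (nesym nr') hp hr'): qb => qb.
have hL := lam_line hF he hm hp hr (nesym nr).
have lr' : lin (lamf m e p) (vsub (lamf m e r) (lamf m e p)) (lamf m e r').
  apply/(LinesEq hF (lin_mem0 _ _) qa (lin_mem0 _ _) qb (nesym nq)); exact: lin_mem1.
have := no3B hF he hm hL (lamB m e p) (lamB m e r) (lamB m e r') (lin_mem0 _ _) (lin_mem1 _ _) lr'.
case=> [E|[E|E]].
- by apply: nr; apply: (lam_inj hF he hm).
- by apply: nr'; apply: (lam_inj hF he hm).
- have Err : r = r' by apply: (lam_inj hF he hm).
  apply: nab; subst r'.
  apply: functional_extensionality => x; apply: propositional_extensionality.
  by rewrite ha hb.
Qed.

Lemma lam_nonsurj (F : unitRingType) m (hF : skew_field F) (e : nat -> F) (he : injective e)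
  (hm : if m is Some k then (3 <= k)%N else true) :
  exists q, isPt m q /\ forall p, isPt None p -> lamf m e p <> q.
Proof.
have hk0 : okd m 0 by rewrite /okd; case: m hm {he} => // k hk; apply: leq_trans hk.
have h0 : isPt m (fun _ : nat => (0 : F)) by split => //; exists 0%N.
have he0 : isPt m (ek (F := F) 0) by apply: ek_pt.
have ne0 : ek (F := F) 0 <> (fun _ => 0).
  move=> E; have := fapp 0%N E; rewrite /ek /= => /eqP; by rewrite oner_eq0.
have hL := isLine_lin h0 he0 ne0.
set z := fun k => (fun i => (fun _ : nat => (0 : F)) i + e k * ek 0 i).
have zl : forall k, lin (fun _ => 0) (ek 0) (z k) by move=> k; exists (e k).
have zp : forall k, isPt m (z k) by move=> k; apply: isPt_lin.
have zi : forall k k', z k = z k' -> k = k'.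
  by move=> k k' /(lin_inj hF ne0) /he.
apply: NNPP => H.
have hB : forall k, Bset m e (z k).
  move=> k; apply: NNPP => nB; apply: H; exists (z k); split => // p _ E.
  by apply: nB; rewrite -E; apply: lamB.
have := no3B hF he hm hL (hB 0%N) (hB 1%N) (hB 2%N) (zl _) (zl _) (zl _).
by case=> [/zi|[/zi|/zi]].
Qed.

Theorem mainTheorem6 (F' : unitRingType) (m : affdim)
  (hF' : skew_field F') (hcount : countably_infinite F')
  (hm : if m is Some k then (3 <= k)%N else true) :
  exists phi : ((nat -> 'F_2) -> Prop) -> ((nat -> F') -> Prop),
    (forall a, isLine None a -> isLine m (phi a)) /\
    (forall a b, isLine None a -> isLine None b -> phi a = phi b -> a = b) /\
    (forall a', isLine m a' -> exists a, isLine None a /\ phi a = a') /\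
    (forall a b, isLine None a -> isLine None b -> related a b ->
        related (phi a) (phi b)) /\
    exists (lam : (nat -> 'F_2) -> (nat -> F')) (B' : (nat -> F') -> Prop),
      (forall a b p, isLine None a -> isLine None b -> adjacent a b ->
          a p -> b p ->
          forall q, (phi a q /\ phi b q) <-> q = lam p) /\
      (forall p, isPt None p -> isPt m (lam p)) /\
      (forall p1 p2, isPt None p1 -> isPt None p2 -> lam p1 = lam p2 -> p1 = p2) /\
      (exists q, isPt m q /\ forall p, isPt None p -> lam p <> q) /\
      (forall q, B' q -> isPt m q) /\
      (forall l x y z, isLine m l -> l x -> l y -> l z -> B' x -> B' y -> B' z ->
          x = y \/ x = z \/ y = z) /\
      (forall l, isLine m l -> exists x y, x <> y /\ l x /\ l y /\ B' x /\ B' y /\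
          forall z, l z -> B' z -> z = x \/ z = y) /\
      (forall q, B' q <-> exists p, isPt None p /\ q = lam p).
Proof.
have [e [g eK gK]] := hcount.
have he : injective e := can_inj eK.
exists (phif m e).
split; first by move=> a hA; exact: (phi_line hF' he hm).
split; first by move=> a b hA hB; exact: (phi_inj hF' he hm).
split; first by move=> a' hl; exact: (phi_surj hF' he hm gK).
split.
  move=> a b hA hB [p [ap bp]]; exists (lamf m e p).
  by split; apply: (phi_rel hF' he hm).
exists (lamf m e), (Bset m e).
split; first by move=> a b p hA hB hab ap bp; exact: (phi_spec hF' he hm).
split; first by move=> p _; exact: bb_pt.
split; first by move=> p1 p2; exact: (lam_inj hF' he hm).
split; first exact: (lam_nonsurj hF' he hm).
split; first by move=> q [n ->]; exact: bb_pt.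
split.
  move=> l x y z hl lx ly lz bx bY bz; exact: (no3B hF' he hm hl bx bY bz lx ly lz).
split; first by move=> l hl; exact: (exactly_two hF' he hm gK).
by move=> q; exact: lam_B.
Qed.
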